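(* Let $k\ge 2$, $r\ge k$, and let $H$ be a complete $k$-partite graph on $h$ vertices. There exists $\gamma_0>0$ such that for every $0<\gamma<\gamma_0$ there exist $\zeta>0$ and $n_0$ with the following property: for every $n\ge n_0$, if $P$ is a complete $s$-partite $K_{r+1}$-free graph on $n$ vertices with $\mathcal N(H,P)\ge \mathrm{ex}(n,H,K_{r+1})-\zeta n^h$, then $s=r$ and every part of $P$ has size at least $\gamma n$.
   Context: $\mathcal N(H,G)$ is the number of subgraphs of $G$ isomorphic to $H$; $\mathrm{ex}(n,H,K_{r+1})$ is the maximum of $\mathcal N(H,G)$ over $n$-vertex graphs $G$ containing no clique $K_{r+1}$. *)

(* Defs.v *)
From HB Require Import structures.
From mathcomp Require Import all_boot all_order all_algebra.
From mathcomp Require Import reals.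
Set Implicit Arguments. Unset Strict Implicit. Unset Printing Implicit Defensive.

(* A (simple) graph on the vertex set 'I_n is given by its set of ordered
   edge pairs, required to be symmetric and irreflexive. *)
Definition graph (n : nat) := {set 'I_n * 'I_n}.

Definition simple_graph n (G : graph n) : bool :=
  [forall x : 'I_n, (x, x) \notin G] &&
  [forall x : 'I_n, forall y : 'I_n, ((x, y) \in G) ==> ((y, x) \in G)].

Definition clique_free n (m : nat) (G : graph n) : bool :=
  ~~ [exists S : {set 'I_n}, (#|S| == m) &&
        [forall x in S, forall y in S, (x != y) ==> ((x, y) \in G)]].

Definition cmp_colouring n s (c : 'I_n -> 'I_s) (G : graph n) : Prop :=
  (forall i : 'I_s, exists x : 'I_n, c x = i) /\
  (forall x y : 'I_n, ((x, y) \in G) = (c x != c y)).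

Definition complete_multipartite n s (G : graph n) : Prop :=
  exists c : 'I_n -> 'I_s, cmp_colouring c G.

(* A copy of H in G: the image of an injective homomorphism f, recorded as
   (vertex set, edge set).  The number of distinct copies is N(H,G), the
   number of subgraphs of G isomorphic to H. *)
Definition copy h n (H : graph h) (f : {ffun 'I_h -> 'I_n}) :=
  (f @: [set: 'I_h], [set (f p.1, f p.2) | p in H]).

Definition embedding h n (H : graph h) (G : graph n) (f : {ffun 'I_h -> 'I_n}) : bool :=
  injectiveb f && [forall p in H, (f p.1, f p.2) \in G].

Definition NH h n (H : graph h) (G : graph n) : nat :=
  #|[set copy H f | f in [pred f | embedding H G f]]|.

Definition exHK h (H : graph h) (n r : nat) : nat :=
  \max_(G : graph n | simple_graph G && clique_free r.+1 G) NH H G.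

(* Main.v *)
Require Import Defs.
From HB Require Import structures.
From mathcomp Require Import all_boot all_order all_algebra.
From mathcomp Require Import reals.
From mathcomp Require Import zify lra ring.
Import Order.TTheory GRing.Theory Num.Theory.

Lemma arithA n r h Y Z X ex NH Sm D :
  0 < n -> 0 < h -> 0 < r -> D = 2 * h * r * Y * Z ->
  X <= Y * Z * ex -> D * Sm <= r * n -> NH * n <= h * Sm * X ->
  2 * Z * Y * NH + X <= 2 * Z * Y * ex.
Proof.
move=> n0 h0 r0 DE hX hS hN.
have e1 : D * (NH * n) <= D * (h * Sm * X) by rewrite leq_mul2l hN orbT.
have e1' : D * Sm * (h * X) <= r * n * (h * X) by rewrite leq_mul2r hS orbT.
have e2 : D * NH * n <= h * r * X * n.
  apply: leq_trans (_ : D * (h * Sm * X) <= _).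
    by rewrite -mulnA.
  apply: leq_trans (_ : D * Sm * (h * X) <= _); first by lia.
  by apply: leq_trans e1' _; lia.
have e3 : D * NH <= h * r * X by rewrite -(leq_pmul2r n0).
have e4 : (h * r) * (2 * Z * Y * NH) <= (h * r) * X.
  have -> : (h*r)*(2*Z*Y*NH) = D * NH by rewrite DE; lia.
  exact: e3.
have e5 : 2 * Z * Y * NH <= X.
  by move: e4; rewrite leq_pmul2l // muln_gt0 h0 r0.
lia.
Qed.

Lemma arithB n h Z E t c Lo NH ex Xm Tm Em G0 D :
  0 < n -> 0 < D -> 0 < Z -> 0 < h ->
  G0 = 2 * Z * h * h * Em * D ->
  Z * NH + t * Tm <= Z * ex + Z * Lo ->
  Lo * n * n <= h * h * (t * c * (n * Xm)) ->
  G0 * c <= n -> n <= E * t -> Xm <= Em * Tm ->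
  (G0 * Z * E) * NH + n * Xm <= (G0 * Z * E) * ex.
Proof.
move=> n0 D0 Z0 h0 GE f1 f2 f3 f4 f5.
have s1 : G0 * Lo <= h * h * t * Xm.
  have a1 : G0 * (Lo * n * n) <= G0 * (h * h * (t * c * (n * Xm))).
    by rewrite leq_mul2l f2 orbT.
  have a2 : (G0 * c) * (h * h * t * n * Xm) <= n * (h * h * t * n * Xm).
    by rewrite leq_mul2r f3 orbT.
  have a3 : (G0 * Lo) * (n * n) <= (h * h * t * Xm) * (n * n).
    have e1 : (G0 * Lo) * (n * n) = G0 * (Lo * n * n) by lia.
    have e2 : G0 * (h * h * (t * c * (n * Xm))) = (G0 * c) * (h * h * t * n * Xm) by lia.
    have e3 : n * (h * h * t * n * Xm) = (h * h * t * Xm) * (n * n) by lia.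
    by rewrite e1 -e3; apply: leq_trans a1 _; rewrite e2.
  by move: a3; rewrite leq_pmul2r // muln_gt0 n0.
have s2 : 2 * Z * h * h * t * Xm <= G0 * (t * Tm).
  have a1 : (2 * Z * h * h * t * D) * Xm <= (2 * Z * h * h * t * D) * (Em * Tm).
    by rewrite leq_mul2l f5 orbT.
  have a2 : (2 * Z * h * h * t * Xm) * 1 <= (2 * Z * h * h * t * Xm) * D.
    by rewrite leq_mul2l D0 orbT.
  rewrite GE; apply: (@leq_trans ((2 * Z * h * h * t * D) * Xm)); first by lia.
  by apply: leq_trans a1 _; lia.
have s3 : G0 * (Z * NH) + G0 * (t * Tm) <= G0 * (Z * ex) + Z * (G0 * Lo).
  have := leq_mul (leqnn G0) f1; lia.
have s3' : Z * (G0 * Lo) <= Z * (h * h * t * Xm) by rewrite leq_mul2l s1 orbT.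
have s4 : G0 * Z * NH + Z * h * h * t * Xm <= G0 * Z * ex.
  have : 1 * (h * h * t * Xm) <= Z * (h * h * t * Xm) by rewrite leq_mul2r Z0 orbT.
  lia.
have s5 : E * (G0 * Z * NH + Z * h * h * t * Xm) <= E * (G0 * Z * ex) by rewrite leq_mul2l s4 orbT.
have s6 : n * Xm <= (E * t) * Xm by rewrite leq_mul2r f4 orbT.
have s7 : (E * t * Xm) * 1 <= (E * t * Xm) * (Z * h * h).
  by rewrite leq_mul2l !muln_gt0 Z0 h0 orbT.
lia.
Qed.

Set Implicit Arguments. Unset Strict Implicit.
Section Chunk.
Variables (T : finType) (x0 : T) (X : {set T}) (t : nat).
Definition chunk (a : nat) : {set T} := [set nth x0 (enum X) (a * t + j) | j : 'I_t].

Lemma chunk_idx a (j : 'I_t) : a.+1 * t <= #|X| -> a * t + j < size (enum X).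
Proof. by rewrite -cardE mulSn addnC => le; apply: leq_trans le; rewrite ltn_add2l. Qed.

Lemma chunk_sub a : a.+1 * t <= #|X| -> chunk a \subset X.
Proof.
move=> le; apply/subsetP => x /imsetP [j _ ->].
by rewrite -mem_enum mem_nth // chunk_idx.
Qed.

Lemma card_chunk a : a.+1 * t <= #|X| -> #|chunk a| = t.
Proof.
move=> le; rewrite card_imset ?card_ord // => j1 j2 /eqP.
rewrite nth_uniq ?chunk_idx ?enum_uniq // eqn_add2l => /eqP e; exact: val_inj.
Qed.

Lemma chunk_inj a b x : a.+1 * t <= #|X| -> b.+1 * t <= #|X| ->
  x \in chunk a -> x \in chunk b -> a = b.
Proof.
move=> la lb /imsetP [j _ ->] /imsetP [j' _] /eqP.
rewrite nth_uniq ?chunk_idx ?enum_uniq // => /eqP e.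
have t0 : 0 < t by apply: leq_ltn_trans (ltn_ord j).
have := congr1 (fun m => m %/ t) e.
by rewrite !divnMDl // !divn_small ?ltn_ord // !addn0.
Qed.
End Chunk.

Lemma card_bigcup_le (I T : finType) (P : pred I) (F : I -> {set T}) :
  #|\bigcup_(i | P i) F i| <= \sum_(i | P i) #|F i|.
Proof.
elim/big_ind2: _ => //; first by rewrite cards0.
move=> s1 A1 s2 A2 l1 l2; apply: leq_trans (leq_add l1 l2).
by case: (leq_card_setU A1 A2).
Qed.

Lemma prod_le_exp (I : finType) (P : pred I) (F : I -> nat) n :
  (forall i, P i -> F i <= n) -> \prod_(i | P i) F i <= n ^ #|P|.
Proof. by move=> le; rewrite -prod_nat_const; apply: leq_prod. Qed.

Lemma prod_le_exp1 (I : finType) (P : pred I) (F : I -> nat) n b :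
  P b -> (forall i, P i -> F i <= n) ->
  (\prod_(i | P i) F i) * n <= F b * n ^ #|P|.
Proof.
move=> Pb le; rewrite (bigD1 b) //= (cardD1 b P).
have -> : (b \in P) = true by rewrite unfold_in.
rewrite add1n expnS -mulnA leq_mul2l mulnC leq_mul2l; apply/orP; right.
have -> : #|[predD1 P & b]| = #|[pred i | P i & i != b]|.
  by apply: eq_card => i; rewrite !inE andbC.
apply/orP; right. apply: (@prod_le_exp _ [pred i | P i && (i != b)] F n) => i /andP [Pi _]; exact: le.
Qed.

Lemma prod_le_exp2 (I : finType) (F : I -> nat) n a b :
  a != b -> (forall i, F i <= n) ->
  (\prod_i F i) * n * n <= F a * F b * n ^ #|I|.
Proof.
move=> ab le.
have h1 := @prod_le_exp1 I [pred i | i != a] F n b.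
rewrite /= eq_sym ab in h1; have {}h1 := h1 isT (fun i _ => le i).
rewrite (bigD1 a) //= -!mulnA leq_mul2l; apply/orP; right.
rewrite mulnA; apply: leq_trans (leq_mul h1 (leqnn n)) _.
rewrite -mulnA leq_mul2l; apply/orP; right; rewrite -expnSr.
have -> : #|[pred i | i != a]| = #|predC1 a| by apply: eq_card. have I0 : 0 < #|I| by apply/card_gt0P; exists a. by rewrite cardC1 (prednK I0).

Qed.

Lemma leq_expl m1 m2 e : m1 <= m2 -> m1 ^ e <= m2 ^ e.
Proof. by move=> le; elim: e => // e IH; rewrite !expnS leq_mul. Qed.

Section Gen.
Variables (h n : nat) (H : graph h).

Definition fam (S : 'I_h -> {set 'I_n}) : {set {ffun 'I_h -> 'I_n}} :=
  [set f : {ffun 'I_h -> 'I_n} | [forall w, f w \in S w]].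

Lemma card_fam S : #|fam S| = \prod_w #|S w|.
Proof.
have -> : #|fam S| = #|family S|.
  apply: eq_card => f; rewrite inE; apply/forallP/familyP => //.
by rewrite card_family foldrE big_map big_enum.
Qed.

Lemma copies_lb (A : {set {ffun 'I_h -> 'I_n}}) :
  #|A| <= h ^ h * #|[set copy H f | f in A]|.
Proof.
rewrite -sum1_card (partition_big_imset (copy H)) /=.
rewrite mulnC -sum_nat_const; apply: leq_sum => K /imsetP [f0 _ ->].
rewrite sum1_card.
have : #|[pred f in A | copy H f == copy H f0]| <= #|ffun_on_mem 'I_h (mem (f0 @: [set: 'I_h]))|.
  apply: subset_leq_card; apply/subsetP => f; rewrite !inE => /andP [_ /eqP e].
  apply/ffun_onP => x; move: e => [e1 _]; rewrite -e1; exact: imset_f.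
rewrite card_ffun_on card_ord => /leq_trans; apply.
apply: leq_expl; by rewrite (leq_trans (leq_imset_card _ _)) // cardsT card_ord.
Qed.

End Gen.

Section G.
Variables (h n : nat) (H : graph h).

Definition Pd r (d : 'I_n -> 'I_r) : graph n := [set p | d p.1 != d p.2].
Definition cls r (d : 'I_n -> 'I_r) i := [set x | d x == i].

Lemma Pd_simple r (d : 'I_n -> 'I_r) : simple_graph (Pd d).
Proof.
apply/andP; split; apply/forallP => x; first by rewrite inE eqxx.
by apply/forallP => y; apply/implyP; rewrite !inE eq_sym.
Qed.

Lemma Pd_free r (d : 'I_n -> 'I_r) : clique_free r.+1 (Pd d).
Proof.
apply/negP => /existsP [S /andP [/eqP cS /forallP all]].
have inj : {in S &, injective d}.
  move=> x y xS yS dxy; apply/eqP; apply/negPn/negP => xy.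
  move: (all x); rewrite xS /= => /forallP /(_ y); rewrite yS /= xy /= inE /= dxy.
  by rewrite eqxx.
have := card_in_imset inj; rewrite cS => e.
have := max_card (d @: S); rewrite e card_ord.
by rewrite ltnn.
Qed.

Lemma NH_le_ex r (d : 'I_n -> 'I_r) : NH H (Pd d) <= exHK H n r.
Proof. by apply: (leq_bigmax_cond (Pd d)); rewrite Pd_simple Pd_free. Qed.

Lemma NH_le_emb (G : graph n) : NH H G <= #|[pred f | embedding H G f]|.
Proof. exact: leq_imset_card. Qed.

Definition disj (S : 'I_h -> {set 'I_n}) :=
  forall w w' x, x \in S w -> x \in S w' -> w = w'.
Definition edgec (G : graph n) (S : 'I_h -> {set 'I_n}) :=
  forall a b x y, (a, b) \in H -> x \in S a -> y \in S b -> (x, y) \in G.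

Lemma emb_fam (G : graph n) S : disj S -> edgec G S -> forall f, f \in fam S -> embedding H G f.
Proof.
move=> dS eS f; rewrite inE => /forallP fS; apply/andP; split.
  by apply/injectiveP => w w' e; apply: (dS w w' (f w)) => //; rewrite e.
apply/forallP => -[a b]; apply/implyP => ab; exact: eS ab (fS a) (fS b).
Qed.

Lemma NH_ge_fam (G : graph n) S : disj S -> edgec G S -> #|fam S| <= h ^ h * NH H G.
Proof.
move=> dS eS; apply: leq_trans (copies_lb H (fam S)) _; rewrite leq_mul2l.
apply/orP; right; apply: subset_leq_card; apply/subsetP => K /imsetP [f fS ->].
by apply: imset_f; rewrite inE; apply: emb_fam fS.
Qed.

End G.

Section CaseB.
Variables (k r h : nat) (H : graph h) (cH : 'I_h -> 'I_k).
Hypotheses (k2 : 1 < k) (kr : k <= r) (Hc : cmp_colouring cH H).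

Lemma Hsym a b : ((a, b) \in H) = ((b, a) \in H).
Proof. by rewrite !Hc.2 eq_sym. Qed.

Lemma card_le_n n (A : {set 'I_n}) : #|A| <= n.
Proof. by apply: leq_trans (max_card _) _; rewrite card_ord. Qed.

Lemma div_le n D c : n <= D * c -> n %/ D <= c.
Proof.
case: D => [|D] le; first by rewrite divn0.
by apply: leq_trans (leq_div2r _ le) _; rewrite mulKn.
Qed.

Lemma caseB n (d : 'I_n -> 'I_r) (i : 'I_r) (D t : nat) :
  t = n %/ (D * h.+1) -> 0 < t ->
  k <= #|[set c | n <= D * #|cls d c|]| ->
  D * #|cls d i| < n ->
  exists Lo, h ^ h * NH H (Pd d) + t ^ h <= h ^ h * exHK H n r + h ^ h * Lo /\
             Lo * n * n <= h * h * (t * #|cls d i| * n ^ h).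
Proof.
move=> tE t0 kBG iS.
set BG := [set c | n <= D * #|cls d c|] in kBG.
have n0 : 0 < n by apply: leq_trans t0 _; rewrite tE leq_div.
pose x0 : 'I_n := Ordinal n0.
pose be (p : 'I_k) : 'I_r := enum_val (widen_ord kBG p).
have beBG p : be p \in BG by apply: enum_valP.
have beinj : injective be.
  by move=> p q /enum_val_inj /(congr1 val) /= e; apply: val_inj.
have iBG : i \notin BG by rewrite inE -ltnNge.
have big p : h.+1 * t <= #|cls d (be p)|.
  have := beBG p; rewrite inE => le.
  rewrite tE divnMA mulnC; apply: leq_trans (leq_divM _ _) _.
  exact: div_le.
pose p0 : 'I_k := Ordinal (ltn_trans (ltnSn 0) k2).
pose p1 : 'I_k := Ordinal k2.
have [u uE] := Hc.1 p0.
have [v vE] := Hc.1 p1.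
have uv : (u, v) \in H by rewrite Hc.2 uE vE.
have vu : v != u by apply/eqP => e; move: uv; rewrite e Hc.2 eqxx.
pose idx (w : 'I_h) : nat := if w == u then h else w.
pose col (w : 'I_h) := if w == u then be p1 else be (cH w).
pose S (w : 'I_h) := chunk x0 (cls d (col w)) t (idx w).
have idxle w : (idx w).+1 * t <= #|cls d (col w)|.
  have le1 : (idx w).+1 * t <= h.+1 * t.
    rewrite leq_mul2r ltnS /idx; apply/orP; right; case: ifP => _ //; exact: ltnW.
  by apply: leq_trans le1 _; rewrite /col; case: ifP => _; exact: big.
have Ssub w : S w \subset cls d (col w) by apply: (chunk_sub x0) (idxle w).
have Scard w : #|S w| = t by apply: (card_chunk x0) (idxle w).
have Sdisj : disj S.
  move=> w w' x xw xw'.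
  have ec : col w = col w'.
    move: (subsetP (Ssub w) x xw) (subsetP (Ssub w') x xw'); rewrite !inE.
    by move=> /eqP <- /eqP <-.
  have ei : idx w = idx w'.
    apply: (chunk_inj (x0:=x0) (X := cls d (col w)) (t:=t) (idxle w) _ xw).
      by rewrite ec; apply: idxle.
    by rewrite /S -ec in xw'.
  move: ei; rewrite /idx; case: (w =P u) => [->|wu]; case: (w' =P u) => [->|w'u] //.
  - by move=> e; have := ltn_ord w'; rewrite -e ltnn.
  - by move=> e; have := ltn_ord w; rewrite e ltnn.
  - by move=> e; apply: val_inj.
have colu : col u = be p1 by rewrite /col eqxx.
have Su x : x \in S u -> d x = be p1.
  by move=> xu; have := subsetP (Ssub u) x xu; rewrite inE colu => /eqP.
pose d' x := if x \in S u then i else d x.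
have F3 w x : x \in S w -> d' x = if w == u then i else be (cH w).
  move=> xw; rewrite /d'; case: ifP => [xu|xu].
    by rewrite (Sdisj w u x xw xu) eqxx.
  case: (w =P u) => [e|wu]; first by move: xu; rewrite -e xw.
  by have := subsetP (Ssub w) x xw; rewrite inE /col; move/eqP: wu => /negbTE ->; move/eqP.
have F4 : edgec H (Pd d') S.
  move=> a b x y ab xa yb; rewrite inE /= (F3 _ _ xa) (F3 _ _ yb).
  have cab : cH a != cH b by rewrite -Hc.2.
  case: (a =P u) => [au|au]; case: (b =P u) => [bu|bu].
  - by move: cab; rewrite au bu eqxx.
  - by apply/eqP => e; move: iBG; rewrite e beBG.
  - by apply/eqP => e; move: iBG; rewrite -e beBG.
  - by rewrite (inj_eq beinj).
have famS : #|fam S| = t ^ h.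
  rewrite card_fam (eq_bigr (fun _ => t)); last by move=> w _; exact: Scard.
  by rewrite prod_nat_const cardT size_enum_ord.
set cP := [set copy H f | f in [pred f | embedding H (Pd d) f]].
set cG := [set copy H f | f in [pred f | embedding H (Pd d') f]].
set cN := [set copy H f | f in fam S].
pose Fp (p : 'I_h * 'I_h) :=
  [set f : {ffun 'I_h -> 'I_n} | (f p.1 \in S u) && (f p.2 \in cls d i)].
pose Loss := \bigcup_(p in H) Fp p.
set cL := [set copy H f | f in Loss].
have cNP : cP :&: cN = set0.
  apply/setP => K; rewrite !inE; apply/negP => /andP [/imsetP [g gP e] /imsetP [f fS e']].
  have : (f u, f v) \in (copy H f).2.
    by apply: (imset_f (fun p => (f p.1, f p.2)) uv).
  rewrite -e' e => /imsetP [p pH [e1 e2]].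
  move: gP; rewrite inE => /andP [_ /forallP /(_ p)]; rewrite pH /= inE /= -e1 -e2.
  move: fS; rewrite inE => /forallP fS.
  rewrite (Su _ (fS u)).
  have := subsetP (Ssub v) _ (fS v); rewrite inE /col.
  by rewrite (negbTE vu) => /eqP ->; rewrite vE eqxx.
have hNG : cN \subset cG.
  apply/subsetP => K /imsetP [f fS ->]; apply: imset_f.
  by rewrite inE; apply: emb_fam Sdisj F4 f fS.
have hPL : cP \subset cG :|: cL.
  apply/subsetP => K /imsetP [g gP ->]; rewrite inE.
  case E: (embedding H (Pd d') g); first by rewrite imset_f.
  apply/orP; right; apply: imset_f.
  move: gP; rewrite inE => /andP [ginj /forallP gP].
  move/negbT: E; rewrite /embedding ginj /= negb_forall => /existsP [p].
  rewrite negb_imply => /andP [pH nP].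
  have := gP p; rewrite pH /= inE /= => dP.
  rewrite inE /= negbK /d' in nP.
  apply/bigcupP.
  case: ifP nP => [g1|g1]; case: ifP => [g2|g2].
  - by rewrite (Su _ g1) (Su _ g2) eqxx in dP.
  - by move=> /eqP e; exists p => //; rewrite inE g1 inE -e eqxx.
  - move=> /eqP e; exists (p.2, p.1); first by rewrite Hsym; case: p pH {gP dP g1 g2 e}.
    by rewrite inE /= g2 inE e eqxx.
  - by move=> e; rewrite e in dP.
have c1 : #|cP| + #|cN| <= #|cG| + #|cL|.
  rewrite -(cardsUI cP cN) cNP cards0 addn0.
  apply: leq_trans (subset_leq_card (_ : cP :|: cN \subset cG :|: cL)) _.
    apply/subsetP => K; rewrite inE => /orP [KP|KN]; first exact: subsetP hPL K KP.
    by rewrite inE (subsetP hNG K KN).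
  by case: (leq_card_setU cG cL).
have c2 : #|cG| <= exHK H n r by apply: NH_le_ex.
have c3 : #|cL| <= #|Loss| by apply: leq_imset_card.
have c4 : t ^ h <= h ^ h * #|cN| by rewrite -famS; apply: copies_lb.
exists #|Loss|; split.
  apply: leq_trans (leq_add (leqnn _) c4) _.
  rewrite -mulnDr -mulnDr leq_mul2l; apply/orP; right.
  apply: leq_trans c1 _; exact: leq_add.
have hp p : p \in H -> #|Fp p| * n * n <= t * #|cls d i| * n ^ h.
  move=> pH; have p12 : p.1 != p.2.
    have : (p.1, p.2) \in H by rewrite -surjective_pairing.
    by rewrite Hc.2; apply: contraNneq => ->.
  have e21 : (p.2 == p.1) = false by rewrite eq_sym (negbTE p12).
  pose Sp w := if w == p.1 then S u else if w == p.2 then cls d i else [set: 'I_n].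
  have -> : Fp p = fam Sp.
    apply/setP => f; rewrite !inE; apply/andP/forallP => [[f1 f2] w | fa].
      rewrite /Sp; case: ifP => [/eqP->//|_]; case: ifP => [/eqP->|_]; by rewrite inE.
    split; first by have := fa p.1; rewrite /Sp eqxx.
    by have := fa p.2; rewrite /Sp e21 eqxx inE.
  rewrite card_fam.
  have := prod_le_exp2 p12 (fun w => card_le_n (Sp w)).
  by rewrite card_ord /Sp eqxx e21 eqxx Scard.
apply: leq_trans (leq_mul (leq_mul (card_bigcup_le _ _) (leqnn n)) (leqnn n)) _.
rewrite !big_distrl /=. apply: (@leq_trans (\sum_(p in H) (t * #|cls d i| * n ^ h))); first exact: leq_sum.
rewrite sum_nat_const leq_mul2r; apply/orP; right.
by apply: leq_trans (max_card _) _; rewrite card_prod card_ord.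
Qed.
End CaseB.

Section CaseA.
Variables (k r h : nat) (H : graph h) (cH : 'I_h -> 'I_k).
Hypotheses (k2 : 1 < k) (kr : k <= r) (Hc : cmp_colouring cH H).

Lemma ex_lb n tT : tT = n %/ (r * h) -> 0 < tT -> tT ^ h <= h ^ h * exHK H n r.
Proof.
move=> tE t0.
have n0 : 0 < n by apply: leq_trans t0 _; rewrite tE leq_div.
have r0 : 0 < r by apply: leq_trans kr; apply: ltnW.
pose x0 : 'I_n := Ordinal n0.
pose dT (x : 'I_n) : 'I_r := Ordinal (ltn_pmod x r0).
have clsT c : n %/ r <= #|cls dT c|.
  have bnd (j : 'I_(n %/ r)) : j * r + c < n.
    apply: leq_trans (_ : j.+1 * r <= n).
      by rewrite mulSn; have := ltn_ord c; lia.
    apply: leq_trans (leq_divM n r); rewrite leq_mul2r ltn_ord orbT //.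
  pose g j := Ordinal (bnd j).
  have ginj : injective g.
    move=> j j' /(congr1 val) /= /(congr1 (fun m => m %/ r)).
    rewrite !divnMDl // (divn_small (ltn_ord c)) !addn0 => e; exact: val_inj.
  rewrite -{1}(card_ord (n %/ r)) -(card_imset _ ginj).
  apply: subset_leq_card; apply/subsetP => x /imsetP [j _ ->].
  by rewrite inE; apply/eqP; apply: val_inj; rewrite /= modnMDl modn_small ?ltn_ord.
have big c : h * tT <= #|cls dT c|.
  apply: leq_trans (clsT c); rewrite tE divnMA mulnC; exact: leq_divM.
pose col (w : 'I_h) := widen_ord kr (cH w).
pose S (w : 'I_h) := chunk x0 (cls dT (col w)) tT w.
have idxle (w : 'I_h) : w.+1 * tT <= #|cls dT (col w)|.
  by apply: leq_trans (big _); rewrite leq_mul2r ltn_ord orbT.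
have Ssub w : S w \subset cls dT (col w) by apply: (chunk_sub x0) (idxle w).
have Scard w : #|S w| = tT by apply: (card_chunk x0) (idxle w).
have Sdisj : disj S.
  move=> w w' x xw xw'.
  have ec : col w = col w'.
    move: (subsetP (Ssub w) x xw) (subsetP (Ssub w') x xw'); rewrite !inE.
    by move=> /eqP <- /eqP <-.
  apply: val_inj.
  apply: (chunk_inj (x0:=x0) (X := cls dT (col w)) (t:=tT) (idxle w) _ xw).
    by rewrite ec; apply: idxle.
  by rewrite /S -ec in xw'.
have F4 : edgec H (Pd dT) S.
  move=> a b x y ab xa yb; rewrite inE /=.
  move: (subsetP (Ssub a) x xa) (subsetP (Ssub b) y yb); rewrite !inE => /eqP -> /eqP ->.
  by move: ab; rewrite Hc.2; apply: contra => /eqP /(congr1 val) /= e; apply/eqP/val_inj.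
have famS : #|fam S| = tT ^ h.
  rewrite card_fam (eq_bigr (fun _ => tT)); last by move=> w _; exact: Scard.
  by rewrite prod_nat_const cardT size_enum_ord.
rewrite -famS; apply: leq_trans (NH_ge_fam Sdisj F4) _.
by rewrite leq_mul2l NH_le_ex orbT.
Qed.

Lemma caseA_ub n (d : 'I_n -> 'I_r) D :
  #|[set c | n <= D * #|cls d c|]| < k ->
  exists Sm, D * Sm <= r * n /\ NH H (Pd d) * n <= h * Sm * n ^ h.
Proof.
set BG := [set c | n <= D * #|cls d c|] => kBG.
pose Sm := [set x | d x \notin BG].
have [rep repE] : exists rep : 'I_k -> 'I_h, forall p, cH (rep p) = p.
  exact: (fin_all_exists (U := fun _ => 'I_h) (P := fun p x => cH x = p) (fun p => Hc.1 p)).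
exists #|Sm|; split.
  have : Sm \subset \bigcup_(c | c \notin BG) cls d c.
    by apply/subsetP => x; rewrite inE => xS; apply/bigcupP; exists (d x) => //; rewrite inE.
  move/subset_leq_card/leq_trans/(_ (card_bigcup_le _ _)) => le.
  apply: leq_trans (leq_mul (leqnn D) le) _; rewrite big_distrr /=.
  apply: (@leq_trans (\sum_(c | c \notin BG) n)).
    by apply: leq_sum => c; rewrite inE -ltnNge => /ltnW.
  rewrite sum_nat_const leq_mul2r; apply/orP; right.
  by apply: leq_trans (max_card _) _; rewrite card_ord.
have sub : [pred f | embedding H (Pd d) f] \subset
           \bigcup_w [set f : {ffun 'I_h -> 'I_n} | f w \in Sm].
  apply/subsetP => f; rewrite inE => /andP [_ /forallP fE].
  case: (boolP [exists w, f w \in Sm]) => [/existsP [w fw]|].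
    by apply/bigcupP; exists w => //; rewrite inE.
  rewrite negb_exists => /forallP all; exfalso.
  have allB w : d (f w) \in BG.
    by have := all w; rewrite !inE /= negbK.
  pose g p := d (f (rep p)).
  have ginj : injective g.
    move=> p q e; apply/eqP/negPn/negP => pq.
    have := fE (rep p, rep q); rewrite Hc.2 !repE pq /= inE /= /g.
    by rewrite -/(g p) -/(g q) e eqxx.
  have : #|[set g p | p in [set: 'I_k]]| <= #|BG|.
    by apply: subset_leq_card; apply/subsetP => c /imsetP [p _ ->]; apply: allB.
  by rewrite card_imset // cardsT card_ord leqNgt kBG.
apply: leq_trans (leq_mul (NH_le_emb H (Pd d)) (leqnn n)) _.
apply: leq_trans (leq_mul (subset_leq_card sub) (leqnn n)) _.
apply: leq_trans (leq_mul (card_bigcup_le _ _) (leqnn n)) _.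
rewrite big_distrl /=.
apply: (@leq_trans (\sum_(w : 'I_h) #|Sm| * n ^ h)).
  apply: leq_sum => w _.
  have -> : [set f : {ffun 'I_h -> 'I_n} | f w \in Sm] =
            fam (fun w' => if w' == w then Sm else [set: 'I_n]).
    apply/setP => f; rewrite !inE; apply/idP/forallP => [fw w'|fa].
      by case: ifP => [/eqP->|_]; rewrite !inE.
    by have := fa w; rewrite eqxx !inE.
  rewrite card_fam.
  have := prod_le_exp1 (P := xpredT) (F := fun w' => #|if w' == w then Sm else [set: 'I_n]|) (n := n) (b := w) isT (fun w' _ => card_le_n _).
  by rewrite eqxx cardT size_enum_ord.
by rewrite sum_nat_const card_ord mulnA.
Qed.

End CaseA.

Lemma div_lb n d : 0 < d -> d <= n -> n <= 2 * d * (n %/ d).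
Proof.
move=> d0 dn.
have q0 : 0 < n %/ d by rewrite divn_gt0.
have e := divn_eq n d.
have m := ltn_pmod n d0.
have : d * 1 <= d * (n %/ d) by rewrite leq_mul2l q0 orbT.
lia.
Qed.

Section Key.
Variables (k r h : nat) (H : graph h) (cH : 'I_h -> 'I_k).
Hypotheses (k2 : 1 < k) (kr : k <= r) (Hc : cmp_colouring cH H).

Theorem key : exists C G0 N0 : nat, 0 < C /\ 0 < N0 /\ 0 < G0 /\
  forall n (d : 'I_n -> 'I_r) i, N0 <= n -> G0 * #|cls d i| < n ->
    C * NH H (Pd d) + n ^ h <= C * exHK H n r.
Proof.
have h0 : 0 < h.
  have [u _] := Hc.1 (Ordinal (ltnW k2)); exact: leq_ltn_trans (ltn_ord u).
have r0 : 0 < r by apply: leq_trans kr; apply: ltnW.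
have [EA EAE] : exists EA, EA = 2 * r * h by eexists.
have [Y YE] : exists Y, Y = EA ^ h by eexists.
have [Z ZE] : exists Z, Z = h ^ h by eexists.
have [D DE] : exists D, D = 2 * h * r * Y * Z by eexists.
have [CA CAE] : exists CA, CA = 2 * Z * Y by eexists.
have [E EE] : exists E, E = 2 * D * h.+1 by eexists.
have [Em EmE] : exists Em, Em = E ^ h.-1 by eexists.
have [G0 G0E] : exists G0, G0 = 2 * Z * h * h * Em * D by eexists.
have [CB CBE] : exists CB, CB = G0 * Z * E by eexists.
have Z0 : 0 < Z by rewrite ZE expn_gt0 h0.
have Y0 : 0 < Y by rewrite YE expn_gt0 EAE !muln_gt0 r0 h0.
have D0 : 0 < D by rewrite DE !muln_gt0 h0 r0 Y0 Z0.
have E0 : 0 < E by rewrite EE !muln_gt0 D0.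
have Em0 : 0 < Em by rewrite EmE expn_gt0 E0.
have G00 : 0 < G0 by rewrite G0E !muln_gt0 Z0 h0 Em0 D0.
have DG : D <= G0.
  have : 1 * D <= (2 * Z * h * h * Em) * D by rewrite leq_mul2r !muln_gt0 Z0 h0 Em0 orbT.
  by rewrite mul1n G0E.
exists (CA + CB), G0, (r * h + D * h.+1); split; first by rewrite addn_gt0 CAE !muln_gt0 Z0 Y0.
split; first by rewrite addn_gt0 muln_gt0 r0 h0.
split => // n d i nN iS.
have n0 : 0 < n by apply: leq_trans nN; rewrite addn_gt0 muln_gt0 r0 h0.
have NHex := NH_le_ex H d.
have CBle : CB * NH H (Pd d) <= CB * exHK H n r by rewrite leq_mul2l NHex orbT.
case: (ltnP #|[set c | n <= D * #|cls d c|]| k) => kBG.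
- have [Sm [hS hN]] := caseA_ub Hc kBG.
  pose tT := n %/ (r * h).
  have t0 : 0 < tT by rewrite divn_gt0 ?muln_gt0 ?r0 ?h0 //; apply: leq_trans nN; exact: leq_addr.
  have hex := ex_lb k2 kr Hc (erefl tT) t0.
  have nE : n <= EA * tT.
    rewrite EAE -(mulnA 2 r h); apply: div_lb; first by rewrite muln_gt0 r0 h0.
    by apply: leq_trans nN; exact: leq_addr.
  have hX : n ^ h <= Y * Z * exHK H n r.
    apply: leq_trans (leq_expl h nE) _; rewrite expnMn YE -mulnA leq_mul2l ZE.
    by rewrite hex orbT.
  have := arithA _ _ _ _ _ _ _ _ _ _ n0 h0 r0 DE hX hS hN.
  rewrite -CAE => hA.
  by rewrite mulnDl addnAC mulnDl; apply: leq_add hA CBle.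
- have iS' : D * #|cls d i| < n.
  by apply: leq_ltn_trans iS; rewrite leq_mul2r DG orbT.
  pose t := n %/ (D * h.+1).
  have t0 : 0 < t.
    by rewrite divn_gt0 ?muln_gt0 ?D0 //; apply: leq_trans nN; exact: leq_addl.
  have [Lo [f1 f2]] := caseB k2 Hc (erefl t) t0 kBG iS'.
  have nE : n <= E * t.
    rewrite EE -(mulnA 2 D); apply: div_lb; first by rewrite muln_gt0 D0.
    by apply: leq_trans nN; exact: leq_addl.
  have hE : h = h.-1.+1 by rewrite prednK.
  have f5 : n ^ h.-1 <= Em * t ^ h.-1 by rewrite EmE -expnMn; apply: leq_expl.
  have f1' : Z * NH H (Pd d) + t * t ^ h.-1 <= Z * exHK H n r + Z * Lo.
    by rewrite ZE -expnS -hE.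
  have f2' : Lo * n * n <= h * h * (t * #|cls d i| * (n * n ^ h.-1)).
    by rewrite -expnS -hE.
  have := arithB _ _ _ _ _ _ _ _ _ _ _ _ _ _ n0 D0 Z0 h0 G0E f1' f2' (ltnW iS) nE f5.
  rewrite -CBE -expnS -hE => hB.
  have hA : CA * NH H (Pd d) <= CA * exHK H n r by rewrite leq_mul2l NHex orbT.
  by rewrite mulnDl -addnA mulnDl; apply: leq_add hA hB.
Qed.
End Key.

Unset Implicit Arguments. Set Strict Implicit.
Local Open Scope ring_scope.

Lemma contra_real (R : realType) (C NH ex n h : nat) : (0 < C)%N -> (0 < n)%N ->
  (C * NH + n ^ h <= C * ex)%N ->
  ~ ((NH%:R : R) >= ex%:R - (2 * C)%:R^-1 * n%:R ^+ h).
Proof.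
move=> C0 n0 le hyp.
have X0 : 0 < (n%:R : R) ^+ h by rewrite exprn_gt0 // ltr0n.
have Cr : 0 < (C%:R : R) by rewrite ltr0n.
have le' : (C%:R : R) * NH%:R + n%:R ^+ h <= C%:R * ex%:R.
  by rewrite -!natrM -natrX -natrD ler_nat.
have hyp' : (C%:R : R) * ex%:R - n%:R ^+ h / 2 <= C%:R * NH%:R.
  have := ler_wpM2l (ltW Cr) hyp.
  have e : (C%:R : R) * ((2 * C)%:R^-1 * n%:R ^+ h) = n%:R ^+ h / 2.
    by rewrite natrM; field; rewrite gt_eqF.
  by rewrite mulrBr e.
set a := (C%:R : R) * NH%:R in le' hyp'.
set b := (C%:R : R) * ex%:R in le' hyp'.
set X := (n%:R : R) ^+ h in X0 le' hyp'.
lra.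
Qed.

Lemma smallG (R : realType) (G0 m n : nat) (gamma : R) : (0 < G0)%N -> 0 < gamma ->
  gamma < G0%:R^-1 -> m%:R < gamma * n%:R -> (G0 * m < n)%N.
Proof.
move=> G00 g0 gG mg.
have Gr : 0 < (G0%:R : R) by rewrite ltr0n.
have : (m%:R : R) < G0%:R^-1 * n%:R.
  apply: lt_le_trans mg _; apply: ler_wpM2r; [exact: ler0n | exact: ltW].
rewrite -(ltr_pM2l Gr) mulrA mulrV ?unitfE ?gt_eqF // mul1r -natrM ltr_nat.
done.
Qed.

Theorem lemma2p1 (R : realType) (k r h : nat) (H : graph h) :
  (2 <= k)%N -> (k <= r)%N ->
  simple_graph H -> complete_multipartite k H ->
  exists gamma0 : R, 0 < gamma0 /\
    forall gamma : R, 0 < gamma -> gamma < gamma0 ->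
      exists (zeta : R) (n0 : nat), 0 < zeta /\
        forall (n s : nat) (P : graph n) (c : 'I_n -> 'I_s),
          (n0 <= n)%N ->
          cmp_colouring c P ->
          clique_free r.+1 P ->
          (NH H P)%:R >= (exHK H n r)%:R - zeta * (n%:R) ^+ h ->
          s = r /\ forall i : 'I_s, #|[set x | c x == i]|%:R >= gamma * n%:R.
Proof.
move=> k2 kr _ [cH Hc].
have [C [G0 [N0 [C0 [N00 [G00 keyP]]]]]] := key k2 kr Hc.
exists (G0%:R^-1); split; first by rewrite invr_gt0 ltr0n.
move=> gamma g0 gG.
exists ((2 * C)%:R^-1), N0; split; first by rewrite invr_gt0 ltr0n muln_gt0.
move=> n s P c nN [csurj cP] Pfree hNH.
have n0 : (0 < n)%N by apply: leq_trans nN.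
have [rp rpE] : exists rp : 'I_s -> 'I_n, forall j, c (rp j) = j.
  exact: (fin_all_exists (U := fun _ => 'I_n) (P := fun j x => c x = j) csurj).
have sr : (s <= r)%N.
  rewrite leqNgt; apply/negP => rs.
  move/negP: Pfree; apply; apply/existsP.
  exists [set rp (widen_ord rs j) | j : 'I_r.+1]; apply/andP; split.
    rewrite card_imset ?card_ord //.
    by move=> a b /(congr1 c); rewrite !rpE => /(congr1 val) /= e; apply: val_inj.
  apply/forallP => x; apply/implyP => /imsetP [a _ ->].
  apply/forallP => y; apply/implyP => /imsetP [b _ ->].
  by apply/implyP; rewrite cP !rpE; apply: contra => /eqP ->.
pose d x := widen_ord sr (c x).
have Pd_eq : P = Pd d.
  apply/setP => -[x y]; rewrite inE cP /=; congr negb.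
have cls_eq i : cls d (widen_ord sr i) = [set x | c x == i].
  apply/setP => x; rewrite !inE /d; apply/idP/idP => /eqP e; apply/eqP.
    by apply: val_inj; move: (congr1 val e).
  by rewrite e.
have contra_key i : (G0 * #|cls d i| < n)%N -> False.
  move=> hi; have := keyP n d i nN hi; rewrite -Pd_eq => hk.
  exact: (@contra_real R _ _ _ _ _ C0 n0 hk hNH).
have esr : s = r.
  apply/eqP; rewrite eqn_leq sr /=; rewrite leqNgt; apply/negP => lt.
  apply: (contra_key (Ordinal lt)).
  have -> : cls d (Ordinal lt) = set0.
    apply/setP => x; rewrite !inE; apply/negP => /eqP /(congr1 val) /= e.
    by have := ltn_ord (c x); rewrite e ltnn.
  by rewrite cards0 muln0.
split => // i.
rewrite leNgt; apply/negP => lt.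
apply: (contra_key (widen_ord sr i)); rewrite cls_eq.
exact: smallG G00 g0 gG lt.
Qed.
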